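(* In the local model, let $p$ be the node ($x=y=0$) of a fibre over a point $b_0$ with $t(b_0)=0$. The morphism $$\sigma=((-1)^m\sigma^x_m,\dots,-\sigma^x_1,(-1)^m\sigma^y_m,\dots,-\sigma^y_1,\pi^{(m)}):U^{(m)}_B\to\mathbb A^{2m}\times B$$ is a closed embedding in a neighbourhood of the cycle $mp$. (Equivalently: every $\mathfrak S_m$-invariant polynomial in $x_1,\dots,x_m,y_1,\dots,y_m$ is, modulo the relations $x_iy_i=t$, a polynomial in the $\sigma^x_i,\sigma^y_j$ and $t$.)
   Context: Local model: $B$ is an irreducible base with a regular function $t$, and $U\subset\mathbb A^2_{x,y}\times B$ is the family of curves $\{xy=t\}$ over $B$. Thus $U^m_B\subset\mathbb A^{2m}\times B$ is given by $x_1y_1=\dots=x_my_m=t$, $U^{(m)}_B=U^m_B/\mathfrak S_m$ is the relative symmetric product with structure map $\pi^{(m)}:U^{(m)}_B\to B$. $\sigma^x_i$ and $\sigma^y_i$ ($0\le i\le m$, $\sigma_0=1$) denote the elementary symmetric functions of $x_1,\dots,x_m$ and of $y_1,\dots,y_m$, viewed as functions on $U^{(m)}_B$. *)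

(* Defs.v *)
From HB Require Import structures.
From mathcomp Require Import all_boot all_order all_algebra all_fingroup.
Set Implicit Arguments. Unset Strict Implicit. Unset Printing Implicit Defensive.
Import GRing.Theory.
Local Open Scope ring_scope.

(* Multivariate polynomials in n variables over R, as iterated univariate
   polynomials: mpoly R 0 = R, mpoly R n.+1 = {poly (mpoly R n)}.
   Variable number 0 is the outermost indeterminate. *)
Fixpoint mpoly (R : comNzRingType) (n : nat) : comNzRingType :=
  match n with
  | 0 => R
  | n'.+1 => ({poly (mpoly R n')} : comNzRingType)
  end.

Fixpoint mconst (R : comNzRingType) (n : nat) : R -> mpoly R n :=
  match n return R -> mpoly R n with
  | 0 => fun c => c
  | n'.+1 => fun c => (@mconst R n' c)%:P
  end.

(* the i-th variable (0 if i >= n) *)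
Fixpoint mvar (R : comNzRingType) (n : nat) (i : nat) : mpoly R n :=
  match n return mpoly R n with
  | 0 => 0
  | n'.+1 => if i is i'.+1 then (@mvar R n' i')%:P else 'X
  end.

Fixpoint meval (R : comNzRingType) (S : comNzRingType) (f : R -> S)
    (n : nat) (v : nat -> S) : mpoly R n -> S :=
  match n return mpoly R n -> S with
  | 0 => f
  | n'.+1 => fun p => (map_poly (@meval R S f n' (fun i => v i.+1)) p).[v 0]
  end.

Definition xv (R : comNzRingType) (m : nat) (i : 'I_m) : mpoly R (m + m) :=
  @mvar R (m + m) i.
Definition yv (R : comNzRingType) (m : nat) (i : 'I_m) : mpoly R (m + m) :=
  @mvar R (m + m) (m + i)%N.

(* simultaneous permutation action of s on the x's and the y's *)
Definition perm_point (R : comNzRingType) (m : nat) (s : {perm 'I_m})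
  (k : nat) : mpoly R (m + m) :=
  match (insub k : option 'I_m) with
  | Some i => @xv R m (s i)
  | None => match (insub (k - m)%N : option 'I_m) with
            | Some i => @yv R m (s i)
            | None => 0
            end
  end.

Definition perm_act (R : comNzRingType) (m : nat) (s : {perm 'I_m})
  (P : mpoly R (m + m)) : mpoly R (m + m) :=
  @meval R _ (@mconst R (m + m)) (m + m) (@perm_point R m s) P.

Definition sym_invariant (R : comNzRingType) (m : nat) (P : mpoly R (m + m)) :=
  forall s : {perm 'I_m}, perm_act s P = P.

Definition sigx (R : comNzRingType) (m k : nat) : mpoly R (m + m) :=
  \sum_(I : {set 'I_m} | #|I| == k) \prod_(j in I) @xv R m j.
Definition sigy (R : comNzRingType) (m k : nat) : mpoly R (m + m) :=
  \sum_(I : {set 'I_m} | #|I| == k) \prod_(j in I) @yv R m j.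

(* substitute (sigma^x_1..sigma^x_m, sigma^y_1..sigma^y_m) into Q *)
Definition sig_point (R : comNzRingType) (m : nat) (k : nat) : mpoly R (m + m) :=
  if (k < m)%N then @sigx R m k.+1 else @sigy R m (k - m)%N.+1.

Definition eval_at_sigma (R : comNzRingType) (m : nat) (Q : mpoly R (m + m))
  : mpoly R (m + m) :=
  @meval R _ (@mconst R (m + m)) (m + m) (@sig_point R m) Q.

Definition in_rel_ideal (R : comNzRingType) (m : nat) (t : R)
  (P : mpoly R (m + m)) :=
  exists c : 'I_m -> mpoly R (m + m),
    P = \sum_(i < m) c i * (@xv R m i * @yv R m i - @mconst R (m + m) t).

(* Main.v *)
Require Import Defs.
From HB Require Import structures.
From mathcomp Require Import all_boot all_order all_algebra all_fingroup.
Set Implicit Arguments. Unset Strict Implicit. Unset Printing Implicit Defensive.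
Import GRing.Theory.
Local Open Scope ring_scope.

Section MapHorner.
Variables (A S : comNzRingType) (g : A -> S).
Hypotheses (gB : zmod_morphism g) (gM : monoid_morphism g).
Definition gg := g.
HB.instance Definition _ := GRing.isZmodMorphism.Build _ _ gg gB.
HB.instance Definition _ := GRing.isMonoidMorphism.Build _ _ gg gM.
Variable x : S.
Lemma mh_zmod : zmod_morphism (fun p : {poly A} => (map_poly g p).[x]).
Proof. move=> p q; rewrite -/gg rmorphB hornerD hornerN. by []. Qed.
Lemma mh_monoid : monoid_morphism (fun p : {poly A} => (map_poly g p).[x]).
Proof. split; first by rewrite -/gg rmorph1 hornerC.
by move=> p q; rewrite -/gg rmorphM hornerM. Qed.
End MapHorner.

Section Meval.
Variable R : comNzRingType.

Lemma meval_morph n : forall (S : comNzRingType) (f : {rmorphism R -> S}) v,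
  zmod_morphism (@meval R S f n v) /\ monoid_morphism (@meval R S f n v).
Proof.
elim: n => [|n IH] S f v /=.
  split; [exact: rmorphB | split; [exact: rmorph1 | exact: rmorphM]].
have [h1 h2] := IH S f (fun i => v i.+1).
split; [exact: mh_zmod | exact: mh_monoid].
Qed.

HB.instance Definition _ (S : comNzRingType) (f : {rmorphism R -> S}) n v :=
  GRing.isZmodMorphism.Build _ _ (@meval R S f n v) (proj1 (meval_morph n f v)).
HB.instance Definition _ (S : comNzRingType) (f : {rmorphism R -> S}) n v :=
  GRing.isMonoidMorphism.Build _ _ (@meval R S f n v) (proj2 (meval_morph n f v)).

Lemma mconst_morph n : zmod_morphism (@mconst R n) /\ monoid_morphism (@mconst R n).
Proof.
elim: n => [|n [h1 h2]] /=; first by split => //.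
split; first by move=> a b; rewrite h1 polyCB.
split; first by rewrite h2.1.
by move=> a b; rewrite h2.2 polyCM.
Qed.
HB.instance Definition _ n :=
  GRing.isZmodMorphism.Build _ _ (@mconst R n) (proj1 (mconst_morph n)).
HB.instance Definition _ n :=
  GRing.isMonoidMorphism.Build _ _ (@mconst R n) (proj2 (mconst_morph n)).

Lemma meval_const (S : comNzRingType) (f : {rmorphism R -> S}) n : forall v c,
  @meval R S f n v (mconst n c) = f c.
Proof.
elim: n => [|n IH] v c //=.
by rewrite map_polyC hornerC; apply: IH.
Qed.

Lemma meval_var (S : comNzRingType) (f : {rmorphism R -> S}) n : forall v i,
  @meval R S f n v (mvar R n i) = if (i < n)%N then v i else 0.
Proof.
elim: n => [|n IH] v i /=; first by rewrite rmorph0.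
case: i => [|i] /=; first by rewrite map_polyX hornerX.
by rewrite map_polyC hornerC; apply: IH.
Qed.

Lemma mpoly_ind n (Pr : mpoly R n -> Prop) :
  (forall c, Pr (mconst n c)) -> (forall p q, Pr p -> Pr q -> Pr (p + q)) ->
  (forall k p, (k < n)%N -> Pr p -> Pr (mvar R n k * p)) -> forall p, Pr p.
Proof.
elim: n Pr => [|n IH] Pr hc hD hV p; first exact: (hc p).
have hC : forall c : mpoly R n, Pr c%:P.
  apply: (IH (fun c => Pr c%:P)) => //.
  - by move=> a b ha hb; rewrite polyCD; apply: hD.
  - by move=> k a hk ha; rewrite polyCM; apply: (hV k.+1).
elim/poly_ind: p => [|q c hq]; first by have := hC 0; rewrite polyC0.
apply: hD => //; rewrite mulrC; exact: (hV 0%N).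
Qed.
End Meval.
Section Newton.
Variables (A : comNzRingType) (m : nat) (z : 'I_m -> A).
Definition esym r := \sum_(I : {set 'I_m} | #|I| == r) \prod_(j in I) z j.
Definition Fs r j := \sum_(I : {set 'I_m} | #|I| == r)
   \sum_(l | l \notin I) (\prod_(i in I) z i) * z l ^+ j.

Lemma Fs0 j : Fs 0%N j = \sum_l z l ^+ j.
Proof.
rewrite /Fs (big_pred1 set0); last by move=> I; rewrite /= cards_eq0.
rewrite big_set0 /=; apply: eq_big => [l|l _]; first by rewrite in_set0.
by rewrite mul1r.
Qed.

Lemma Fsr0 r : Fs r 0%N = (m - r)%:R * esym r.
Proof.
rewrite /Fs /esym mulr_sumr; apply: eq_bigr => I /eqP hI.
have -> : \sum_(l | l \notin I) (\prod_(i in I) z i) * z l ^+ 0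
   = \sum_(l in ~: I) \prod_(i in I) z i.
  by apply: eq_big => [l|l _]; rewrite ?inE // expr0 mulr1.
rewrite sumr_const [RHS]mulr_natl; congr (_ *+ _); have h := cardsC I; rewrite card_ord hI in h; by rewrite -[in RHS]h addKn.
Qed.

Lemma key r j : esym r.+1 * Fs 0%N j = Fs r.+1 j + Fs r j.+1.
Proof.
rewrite Fs0 /esym mulr_suml.
transitivity (\sum_(I : {set 'I_m} | #|I| == r.+1)
  (\sum_(l | l \in I) (\prod_(i in I) z i) * z l ^+ j +
   \sum_(l | l \notin I) (\prod_(i in I) z i) * z l ^+ j)).
  by apply: eq_bigr => I _; rewrite mulr_sumr (bigID (fun l => l \in I)).
rewrite big_split /= addrC; congr (_ + _).
rewrite /Fs (exchange_big_dep predT) //= [RHS](exchange_big_dep predT) //=.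
apply: eq_bigr => l _.
rewrite (reindex_onto (fun J => l |: J) (fun I => I :\ l)); last first.
  by move=> I /andP[_ hl]; rewrite setD1K.
apply: eq_big => [J|J].
  case: (boolP (l \in J)) => hl /=.
    rewrite andbF; apply/negbTE.
    by apply/negP=> /andP[_ /eqP e]; move: hl; rewrite -e !inE eqxx.
  by rewrite setU1K // eqxx cardsU1 hl setU11 andbT add1n eqSS.
move=> /andP[_ /eqP hl]; have hlJ : l \notin J by rewrite -hl !inE eqxx.
by rewrite big_setU1 //= exprS mulrA [z l * _]mulrC.
Qed.

Section Closure.
Variable G : A -> Prop.
Hypotheses (GD : forall a b, G a -> G b -> G (a + b)) (GN : forall a, G a -> G (- a))
  (GM : forall a b, G a -> G b -> G (a * b)) (Gn : forall n : nat, G n%:R)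
  (Ge : forall r, G (esym r)).
Lemma Fs_mem j : forall r, G (Fs r j).
Proof.
elim: j => [|j IH] r; first by rewrite Fsr0; apply: GM.
have -> : Fs r j.+1 = esym r.+1 * Fs 0%N j - Fs r.+1 j.
  by rewrite key addrAC subrr add0r.
by apply: GD; [apply: GM | apply: GN].
Qed.
Lemma psum_mem j : G (\sum_l z l ^+ j).
Proof. rewrite -Fs0; exact: Fs_mem. Qed.
End Closure.
End Newton.
Section Tsum.
Variables (A : comNzRingType) (m : nat) (x y : 'I_m -> A).
Definition Tm (a b : 'I_m -> nat) := \sum_(s : {perm 'I_m})
   \prod_(i < m) (x (s i) ^+ a i * y (s i) ^+ b i).
Definition pw (al be : nat) := \sum_(l < m) x l ^+ al * y l ^+ be.
Definition upd (a : 'I_m -> nat) (j : 'I_m) (al : nat) :=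
  fun i => if i == j then (a i + al)%N else a i.

Lemma Tm_ext a a' b b' : a =1 a' -> b =1 b' -> Tm a b = Tm a' b'.
Proof. by move=> ha hb; apply: eq_bigr => s _; apply: eq_bigr => i _; rewrite ha hb. Qed.

Lemma Tm_perm (tau : {perm 'I_m}) a b : Tm (a \o tau) (b \o tau) = Tm a b.
Proof.
rewrite /Tm (reindex_inj (mulgI tau)) /=; apply: eq_bigr => s _.
rewrite (reindex_inj (@perm_inj _ tau^-1)) /=; apply: eq_bigr => k _.
by rewrite permM permKV.
Qed.

Lemma Tm_rec a b al be : Tm a b * pw al be = \sum_(j < m) Tm (upd a j al) (upd b j be).
Proof.
rewrite /Tm mulr_suml [RHS]exchange_big /=; apply: eq_bigr => s _.
rewrite /pw mulr_sumr (reindex_inj (@perm_inj _ s)) /=; apply: eq_bigr => j _.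
rewrite (bigD1 j) //= [in RHS](bigD1 j) //= /upd eqxx !exprD.
rewrite [in RHS](eq_bigr (fun i => x (s i) ^+ a i * y (s i) ^+ b i)); last first.
  by move=> i /negbTE ->.
set P := \prod_(i | _) _; set X1 := x _ ^+ a j; set X2 := x _ ^+ al.
set Y1 := y _ ^+ b j; set Y2 := y _ ^+ be.
rewrite -!mulrA; congr (_ * _).
by rewrite [P * _]mulrC -[(X2 * Y2) * P]mulrA mulrCA.

Qed.
End Tsum.

Lemma upd_tperm m (a : 'I_m -> nat) (kk j : 'I_m) :
  (forall i : 'I_m, (kk < i)%N -> a i = 0%N) -> ~~ (j < kk)%N ->
  upd (fun i => if i == kk then 0%N else a i) j (a kk) =1 (a \o tperm j kk).
Proof.
move=> hz hj i /=; rewrite /upd.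
have hj' : j != kk -> a j = 0%N.
  by move=> hne; apply: hz; rewrite ltn_neqAle leqNgt hj andbT eq_sym; exact: hne.
case: tpermP => [->|->|hi1 hi2].
- rewrite eqxx; case: eqP => [e|/eqP hne]; first by rewrite add0n.
  by rewrite hj'.
- rewrite eqxx; case: eqP => [e|/eqP hne]; first by rewrite add0n e.
  by rewrite hj' // eq_sym.
- by move/eqP/negbTE: hi1 => ->; move/eqP/negbTE: hi2 => ->.
Qed.

Section Tmain.
Variables (A : comNzRingType) (m : nat) (x y : 'I_m -> A) (G : A -> Prop).
Hypotheses (GD : forall a b, G a -> G b -> G (a + b)) (GN : forall a, G a -> G (- a))
  (GM : forall a b, G a -> G b -> G (a * b)) (Gn : forall n : nat, G n%:R)
  (Gdiv : forall n a, G (a *+ n.+1) -> G a)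
  (Gpw : forall al be, G (pw x y al be)).

Lemma Gsum (I : finType) (P : pred I) (F : I -> A) :
  (forall i, P i -> G (F i)) -> G (\sum_(i | P i) F i).
Proof.
move=> h; apply: (big_ind G) => //; first by have := Gn 0; rewrite mulr0n.
Qed.

Lemma Tm_mem_k k : (k <= m)%N -> forall a b,
  (forall i : 'I_m, (k <= i)%N -> a i = 0%N /\ b i = 0%N) -> G (Tm x y a b).
Proof.
elim: k => [|k IH] hk a b hz.
  rewrite (@Tm_ext _ _ x y a (fun _ => 0%N) b (fun _ => 0%N)); last 2 first.
  - by move=> i; case: (hz i).
  - by move=> i; case: (hz i).
  rewrite /Tm (eq_bigr (fun _ => 1)); last by move=> s _; apply: big1 => i _; rewrite !expr0 mulr1.
  by rewrite sumr_const.
pose kk := Ordinal hk.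
pose a' := fun i => if i == kk then 0%N else a i.
pose b' := fun i => if i == kk then 0%N else b i.
have hza : forall i : 'I_m, (kk < i)%N -> a i = 0%N by move=> i hi; case: (hz i hi).
have hzb : forall i : 'I_m, (kk < i)%N -> b i = 0%N by move=> i hi; case: (hz i hi).
have IH' : G (Tm x y a' b').
  apply: IH; first exact: ltnW.
  move=> i hi; rewrite /a' /b'; case: eqP => // /eqP hne.
  by apply: hz; rewrite ltn_neqAle hi andbT eq_sym; exact: hne.
have := Tm_rec x y a' b' (a kk) (b kk).
rewrite (bigID (fun j : 'I_m => (j < k)%N)) /=.
rewrite (eq_bigr (fun _ => Tm x y a b) (P := fun j : 'I_m => ~~ (j < k)%N)); last first.
  move=> j hj; rewrite (@Tm_ext _ _ x y _ (a \o tperm j kk) _ (b \o tperm j kk)).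
  - exact: Tm_perm.
  - exact: upd_tperm.
  - exact: upd_tperm.
rewrite sumr_const => e.
have hc : (0 < #|(fun i : 'I_m => ~~ (i < k)%N)|)%N.
  by apply/card_gt0P; exists kk; rewrite unfold_in /= ltnn.
move: e hc; case: #|_| => // c e _.
apply: (Gdiv (n := c)).
have -> : Tm x y a b *+ c.+1 = Tm x y a' b' * pw x y (a kk) (b kk) -
   \sum_(i < m | (i < k)%N) Tm x y (upd a' i (a kk)) (upd b' i (b kk)).
  by rewrite e [RHS]addrC addKr.
apply: GD; first by apply: GM.
apply: GN; apply: Gsum => j hj; apply: IH; first exact: ltnW.
move=> i hi; rewrite /upd /a' /b'.
have -> : (i == j) = false.
  by apply/negbTE; apply/negP => /eqP e1; move: hj; rewrite -e1 ltnNge hi.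
by case: eqP => // /eqP hne; apply: hz; rewrite ltn_neqAle hi andbT eq_sym; exact: hne.
Qed.

Lemma Tm_mem a b : G (Tm x y a b).
Proof. by apply: (Tm_mem_k (k := m)) => // i; rewrite leqNgt ltn_ord. Qed.
End Tmain.

Section Main.
Variables (R : idomainType) (hQ : forall n : nat, (n.+1)%:R \is a @GRing.unit R)
  (t : R) (m : nat).
Local Notation A := (mpoly R (m + m)).
Local Notation cst := (@mconst R (m + m)).
Local Notation X := (@xv R m).
Local Notation Y := (@yv R m).

Definition inI (P : A) := @in_rel_ideal R m t P.

Lemma inI0 : inI 0.
Proof. by exists (fun _ => 0); rewrite big1 // => i _; rewrite mul0r. Qed.
Lemma inID a b : inI a -> inI b -> inI (a + b).
Proof.
move=> [c1 ->] [c2 ->]; exists (fun i => c1 i + c2 i).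
by rewrite -big_split; apply: eq_bigr => i _; rewrite mulrDl.
Qed.
Lemma inIM u a : inI a -> inI (u * a).
Proof.
move=> [c ->]; exists (fun i => u * c i).
by rewrite mulr_sumr; apply: eq_bigr => i _; rewrite mulrA.
Qed.
Lemma inIgen (l : 'I_m) u : inI (u * (X l * Y l - cst t)).
Proof.
exists (fun i => if i == l then u else 0).
rewrite (bigD1 l) //= eqxx big1 ?addr0 // => i /negbTE ->; by rewrite mul0r.
Qed.
Lemma inIpow (l : 'I_m) b : forall u, inI (u * ((X l * Y l) ^+ b - cst t ^+ b)).
Proof.
elim: b => [|b IH] u; first by rewrite !expr0 subrr mulr0; exact: inI0.
have -> : u * ((X l * Y l) ^+ b.+1 - cst t ^+ b.+1) =
   (u * (X l * Y l)) * ((X l * Y l) ^+ b - cst t ^+ b) +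
   (u * cst t ^+ b) * (X l * Y l - cst t).
  set w := X l * Y l; set T := cst t.
  rewrite !exprS !mulrBr [u * T ^+ b * w]mulrAC addrA subrK !mulrA.
  by rewrite [u * T ^+ b * T]mulrAC.
by apply: inID; [apply: IH | apply: inIgen].
Qed.

Local Notation evs := (@eval_at_sigma R m).
Definition G (P : A) := exists Q : A, inI (P - evs Q).

Lemma evs_const c : evs (cst c) = cst c.
Proof. exact: meval_const. Qed.
Lemma evs_var k : (k < m + m)%N -> evs (mvar R (m + m) k) = sig_point R m k.
Proof. by move=> hk; rewrite /eval_at_sigma meval_var hk. Qed.

Lemma GD a b : G a -> G b -> G (a + b).
Proof.
move=> [q1 h1] [q2 h2]; exists (q1 + q2).
rewrite /eval_at_sigma rmorphD opprD addrACA; exact: inID.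
Qed.
Lemma GN a : G a -> G (- a).
Proof.
move=> [q h]; exists (- q).
have -> : - a - evs (- q) = -1 * (a - evs q).
  by rewrite /eval_at_sigma rmorphN mulN1r opprD.
exact: inIM.
Qed.
Lemma GM a b : G a -> G b -> G (a * b).
Proof.
move=> [q1 h1] [q2 h2]; exists (q1 * q2).
have -> : a * b - evs (q1 * q2) = b * (a - evs q1) + evs q1 * (b - evs q2).
  rewrite /eval_at_sigma rmorphM !mulrBr [b * a]mulrC [b * _]mulrC addrA subrK.
  by [].
by apply: inID; apply: inIM.
Qed.
Lemma Gc c : G (cst c).
Proof. by exists (cst c); rewrite evs_const subrr; exact: inI0. Qed.
Lemma Gn n : G n%:R.
Proof. by rewrite -(rmorph_nat cst); exact: Gc. Qed.
Lemma GI a b : G a -> inI (b - a) -> G b.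
Proof.
move=> [q h] hb; exists q.
by rewrite -[b](subrK a) -addrA; apply: inID.
Qed.
Lemma Gdiv n a : G (a *+ n.+1) -> G a.
Proof.
move=> h.
have -> : a = cst ((n.+1)%:R)^-1 * (a *+ n.+1).
  by rewrite -[a *+ _]mulr_natl mulrA -(rmorph_nat cst) -rmorphM mulVr // rmorph1 mul1r.
by apply: GM => //; exact: Gc.
Qed.

Lemma esym0 (z : 'I_m -> A) : esym z 0%N = 1.
Proof.
rewrite /esym (big_pred1 set0); last by move=> I; rewrite /= cards_eq0.
by rewrite big_set0.
Qed.
Lemma esym_big (z : 'I_m -> A) r : (m < r)%N -> esym z r = 0.
Proof.
move=> hr; rewrite /esym big_pred0 // => I; apply/negbTE.
apply/negP => /eqP e; move: (max_card (mem I)); rewrite card_ord e.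
by rewrite leqNgt hr.
Qed.

Lemma GeX r : G (esym X r).
Proof.
case: r => [|r]; first by rewrite esym0; exact: (Gn 1).
case: (ltnP m r.+1) => hr; first by rewrite esym_big //; exact: (Gn 0).
exists (mvar R (m + m) r); rewrite evs_var; last by apply: leq_trans hr (leq_addr _ _).
rewrite /sig_point hr.
have -> : esym X r.+1 = sigx R m r.+1 by [].
rewrite subrr; exact: inI0.
Qed.
Lemma GeY r : G (esym Y r).
Proof.
case: r => [|r]; first by rewrite esym0; exact: (Gn 1).
case: (ltnP m r.+1) => hr; first by rewrite esym_big //; exact: (Gn 0).
exists (mvar R (m + m) (m + r)); rewrite evs_var; last by rewrite ltn_add2l.
rewrite /sig_point ltnNge leq_addr /= addKn.
have -> : esym Y r.+1 = sigy R m r.+1 by [].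
rewrite subrr; exact: inI0.
Qed.

Lemma inIsum (I : finType) (P : pred I) (F : I -> A) :
  (forall i, P i -> inI (F i)) -> inI (\sum_(i | P i) F i).
Proof. move=> h; apply: (big_ind inI) => //; [exact: inI0 | exact: inID]. Qed.

Lemma Gpw_gen (z1 z2 : 'I_m -> A)
  (hgen : forall l b u, inI (u * ((z1 l * z2 l) ^+ b - cst t ^+ b)))
  (hps : forall d, G (\sum_l z1 l ^+ d)) al be :
  (be <= al)%N -> G (\sum_l z1 l ^+ al * z2 l ^+ be).
Proof.
move=> hab; apply: (GI (a := cst t ^+ be * \sum_l z1 l ^+ (al - be))).
  by rewrite -rmorphXn; apply: GM => //; exact: Gc.
rewrite mulr_sumr -sumrB; apply: inIsum => l _.
have -> : z1 l ^+ al * z2 l ^+ be - cst t ^+ be * z1 l ^+ (al - be) =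
  z1 l ^+ (al - be) * ((z1 l * z2 l) ^+ be - cst t ^+ be).
  by rewrite mulrBr exprMn mulrA -exprD subnK // [_ * z1 l ^+ _]mulrC.
exact: hgen.
Qed.

Lemma Gpw al be : G (pw X Y al be).
Proof.
have psX : forall d, G (\sum_l X l ^+ d).
  by move=> d; apply: (@psum_mem _ _ X G GD GN GM Gn GeX d).
have psY : forall d, G (\sum_l Y l ^+ d).
  by move=> d; apply: (@psum_mem _ _ Y G GD GN GM Gn GeY d).
have gX : forall l b u, inI (u * ((X l * Y l) ^+ b - cst t ^+ b)).
  by move=> l b u; exact (inIpow l b u).
have gY : forall l b u, inI (u * ((Y l * X l) ^+ b - cst t ^+ b)).
  by move=> l b u; rewrite [Y l * X l]mulrC; apply: inIpow.
case: (leqP be al) => hab.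
  exact: (@Gpw_gen X Y gX psX al be hab).
rewrite /pw (eq_bigr (fun l => Y l ^+ be * X l ^+ al)); last by move=> l _; rewrite mulrC.
exact: (@Gpw_gen Y X gY psY be al (ltnW hab)).
Qed.

Lemma GT a b : G (Tm X Y a b).
Proof. exact: (Tm_mem GD GN GM Gn Gdiv Gpw). Qed.

Definition mono (a b : 'I_m -> nat) : A := \prod_(i < m) (X i ^+ a i * Y i ^+ b i).

Lemma perm_act_X s i : perm_act s (X i) = X (s i).
Proof.
by rewrite /perm_act /xv meval_var (leq_trans (ltn_ord i) (leq_addr _ _)) /perm_point valK.
Qed.
Lemma perm_act_Y s i : perm_act s (Y i) = Y (s i).
Proof.
rewrite /perm_act /yv meval_var ltn_add2l ltn_ord /perm_point insubF; last first.
  by rewrite ltnNge leq_addr.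
by rewrite addKn valK.
Qed.
Lemma perm_act_c s c : perm_act s (cst c) = cst c.
Proof. exact: meval_const. Qed.
Lemma perm_act_mono s a b :
  perm_act s (mono a b) = \prod_(i < m) (X (s i) ^+ a i * Y (s i) ^+ b i).
Proof.
rewrite /perm_act rmorph_prod; apply: eq_bigr => i _.
by rewrite rmorphM !rmorphXn; congr (_ ^+ _ * _ ^+ _); [exact: perm_act_X | exact: perm_act_Y].
Qed.


Lemma mono_X k a b : X k * mono a b = mono (upd a k 1) b.
Proof.
rewrite /mono (bigD1 k) //= [RHS](bigD1 k) //= /upd eqxx.
rewrite [in RHS](eq_bigr (fun i => X i ^+ a i * Y i ^+ b i)); last first.
  by move=> i /negbTE ->.
by rewrite !mulrA exprD expr1 [xv R k ^+ a k * xv R k]mulrC.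
Qed.
Lemma mono_Y k a b : Y k * mono a b = mono a (upd b k 1).
Proof.
rewrite /mono (bigD1 k) //= [RHS](bigD1 k) //= /upd eqxx.
rewrite [in RHS](eq_bigr (fun i => X i ^+ a i * Y i ^+ b i)); last first.
  by move=> i /negbTE ->.
rewrite !mulrA exprD expr1 [yv R k ^+ b k * _]mulrC.
by rewrite [xv R k ^+ a k * (_ * _)]mulrCA !mulrA.
Qed.

Definition Dspan (P : A) := exists s : seq (R * (('I_m -> nat) * ('I_m -> nat))),
  P = \sum_(u <- s) cst u.1 * mono u.2.1 u.2.2.

Lemma Dspan_all P : Dspan P.
Proof.
apply: (@mpoly_ind R (m + m) Dspan).
- move=> c; exists [:: (c, (fun _ => 0%N, fun _ => 0%N))]; rewrite big_seq1 /=.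
  by rewrite /mono big1 ?mulr1 // => i _; rewrite !expr0 mulr1.
- by move=> p q [s1 ->] [s2 ->]; exists (s1 ++ s2); rewrite big_cat.
- move=> k p hk [s ->]; case: (ltnP k m) => hkm.
    pose kk := Ordinal hkm.
    exists (map (fun u => (u.1, (upd u.2.1 kk 1, u.2.2))) s).
    rewrite big_map mulr_sumr; apply: eq_bigr => u _ /=.
    by rewrite -mono_X mulrCA.
  have hk' : (k - m < m)%N by rewrite ltn_subLR.
  pose kk := Ordinal hk'.
  exists (map (fun u => (u.1, (u.2.1, upd u.2.2 kk 1))) s).
  rewrite big_map mulr_sumr; apply: eq_bigr => u _ /=.
  rewrite -mono_Y mulrCA; congr (_ * (_ * _)).
  by rewrite /yv /= subnKC.
Qed.

Lemma main_G P : @sym_invariant R m P -> G P.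
Proof.
move=> hinv; have [s hs] := Dspan_all P.
have hc : (0 < #|{perm 'I_m}|)%N by apply/card_gt0P; exists (1%g : {perm 'I_m}).
have hN : P *+ #|{perm 'I_m}| = \sum_(sg : {perm 'I_m}) perm_act sg P.
  by rewrite (eq_bigr (fun _ => P)) ?sumr_const // => sg _; exact: hinv.
have hG : G (P *+ #|{perm 'I_m}|).
  rewrite hN.
  have -> : \sum_(sg : {perm 'I_m}) perm_act sg P =
     \sum_(u <- s) cst u.1 * Tm X Y u.2.1 u.2.2.
    rewrite hs /Tm.
    under eq_bigr => sg _ do rewrite /perm_act rmorph_sum.
    rewrite exchange_big /=; apply: eq_bigr => u _.
    rewrite mulr_sumr; apply: eq_bigr => sg _.
    rewrite rmorphM; congr (_ * _); first exact: perm_act_c.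
    exact: perm_act_mono.
  apply: (big_ind G); [exact: (Gn 0) | exact: GD | move=> u _].
  apply: GM; [exact: Gc | exact: GT].
move: hG hc; case: #|_| => // n hG _; exact: Gdiv hG.
Qed.
End Main.

Unset Implicit Arguments.
Set Strict Implicit.
Set Printing Implicit Defensive.

Theorem lemma2p1 (R : idomainType)
    (hQ : forall n : nat, (n.+1)%:R \is a @GRing.unit R)
    (t : R) (m : nat) (P : mpoly R (m + m)) :
  @sym_invariant R m P ->
  exists Q : mpoly R (m + m), @in_rel_ideal R m t (P - @eval_at_sigma R m Q).
Proof. move=> h; exact: (main_G hQ t h). Qed.
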